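(* Let $\{\mathcal G,(\Gamma_0,\Gamma_1),(\widetilde\Gamma_0,\widetilde\Gamma_1)\}$ be a triple for the adjoint pair $\{S,\widetilde S\}$ satisfying (G), (D) and (M). Then $\operatorname{dom}S=\ker\widetilde\Gamma_0\cap\ker\widetilde\Gamma_1$ and $\operatorname{dom}\widetilde S=\ker\Gamma_0\cap\ker\Gamma_1$.
   Context: Let $\mathfrak H$ be a separable Hilbert space. An adjoint pair $\{S,\widetilde S\}$ consists of densely defined closed operators $S,\widetilde S$ in $\mathfrak H$ with $(Sf,g)=(f,\widetilde Sg)$ for all $f\in\operatorname{dom}S$, $g\in\operatorname{dom}\widetilde S$. Fix operators $T\subset S^*$ and $\widetilde T\subset\widetilde S^*$ which are cores, i.e. $\overline T=S^*$ and $\overline{\widetilde T}=\widetilde S^*$ (equivalently $T^*=S$, $\widetilde T^*=\widetilde S$). A triple $\{\mathcal G,(\Gamma_0,\Gamma_1),(\widetilde\Gamma_0,\widetilde\Gamma_1)\}$ for $\{S,\widetilde S\}$ consists of a Hilbert space $\mathcal G$ and linear maps $\Gamma_0,\Gamma_1:\operatorname{dom}T\to\mathcal G$, $\widetilde\Gamma_0,\widetilde\Gamma_1:\operatorname{dom}\widetilde T\to\mathcal G$. Put $A_0:=T\upharpoonright\ker\Gamma_0$ and $\widetilde A_0:=\widetilde T\upharpoonright\ker\widetilde\Gamma_0$. Conditions: (G) $(Tf,g)_{\mathfrak H}-(f,\widetilde Tg)_{\mathfrak H}=(\Gamma_1f,\widetilde\Gamma_0g)_{\mathcal G}-(\Gamma_0f,\widetilde\Gamma_1g)_{\mathcal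 G}$ for all $f\in\operatorname{dom}T$, $g\in\operatorname{dom}\widetilde T$; (D) $\operatorname{ran}\Gamma_0$ and $\operatorname{ran}\widetilde\Gamma_0$ are dense in $\mathcal G$; (M) $A_0^*=\widetilde A_0$ and $\widetilde A_0^*=A_0$. *)

(* Defs.v *)
From HB Require Import structures.
From mathcomp Require Import all_boot all_order all_algebra.
From mathcomp Require Import all_classical all_reals all_analysis.
From mathcomp Require Import complex.
Set Implicit Arguments. Unset Strict Implicit. Unset Printing Implicit Defensive.
Import Order.TTheory GRing.Theory Num.Theory.
Import numFieldNormedType.Exports.
Local Open Scope classical_set_scope.
Local Open Scope ring_scope.

Record is_inner_product (R : realType) (H : completeNormedModType R[i])
    (ip : H -> H -> R[i]) : Prop := IsInnerProduct {
  ip_linear : forall (a : R[i]) (x y z : H),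
      ip (a *: x + y) z = a * ip x z + ip y z;
  ip_conj : forall x y : H, ip y x = (ip x y)^*;
  ip_norm : forall x : H, ip x x = `|x| ^+ 2 }.

Definition separable (T : topologicalType) :=
  exists D : set T, countable D /\ dense D.

Record op (H : Type) := Op { dom : set H; app : H -> H }.

Definition subspace (K : pzRingType) (V : lmodType K) (D : set V) :=
  D 0 /\ forall (a : K) x y, D x -> D y -> D (a *: x + y).

Definition linear_on (K : pzRingType) (V W : lmodType K) (D : set V)
    (f : V -> W) :=
  forall (a : K) x y, D x -> D y -> f (a *: x + y) = a *: f x + f y.

Definition is_op (K : pzRingType) (V : lmodType K) (A : op V) :=
  subspace (dom A) /\ linear_on (dom A) (app A).

Definition graph (H : Type) (A : op H) : set (H * H) :=
  [set p | dom A p.1 /\ p.2 = app A p.1].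

Definition densely_defined (T : topologicalType) (A : op T) := dense (dom A).

Definition closed_op (T : topologicalType) (A : op T) := closed (graph A).

(* The adjoint A^* : dom A^* = {g | exists h, forall f in dom A, (Af,g) = (f,h)},
   A^* g = that (unique, A densely defined) h. *)
Definition adjoint (R : realType) (H : completeNormedModType R[i])
    (ip : H -> H -> R[i]) (A : op H) : op H :=
  Op [set g | exists h, forall f, dom A f -> ip (app A f) g = ip f h]
     (fun g => xget 0 [set h | forall f, dom A f -> ip (app A f) g = ip f h]).

Definition op_restrict (H : Type) (A : op H) (D : set H) : op H :=
  Op (dom A `&` D) (app A).

(* Main.v *)
Require Import Defs.
From HB Require Import structures.
From mathcomp Require Import all_boot all_order all_algebra.
From mathcomp Require Import all_classical all_reals all_analysis.
From mathcomp Require Import complex.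
From mathcomp Require Import ring lra.
Import Order.TTheory GRing.Theory Num.Theory.
Import numFieldNormedType.Exports.
Local Open Scope classical_set_scope.
Local Open Scope ring_scope.

Set Implicit Arguments. Unset Strict Implicit.
Section IP.
Variables (R : realType) (H : completeNormedModType R[i]) (ip : H -> H -> R[i]).
Hypothesis hip : is_inner_product ip.

Lemma cjM (a b : R[i]) : (a * b)^* = a^* * b^*. Proof. exact: rmorphM. Qed.
Lemma cjV (a : R[i]) : (a^-1)^* = (a^*)^-1. Proof. exact: fmorphV. Qed.
Lemma cjD (a b : R[i]) : (a + b)^* = a^* + b^*. Proof. exact: rmorphD. Qed.

Lemma ip0l z : ip 0 z = 0.
Proof.
have := ip_linear hip 1 0 0 z; rewrite scaler0 addr0 mul1r.
by move=> h; apply: (addrI (ip 0 z)); rewrite addr0 -h.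
Qed.
Lemma ipDl x y z : ip (x + y) z = ip x z + ip y z.
Proof. by have := ip_linear hip 1 x y z; rewrite scale1r mul1r. Qed.
Lemma ipZl a x z : ip (a *: x) z = a * ip x z.
Proof. by have := ip_linear hip a x 0 z; rewrite addr0 ip0l addr0. Qed.
Lemma ipNl x z : ip (- x) z = - ip x z.
Proof. by rewrite -scaleN1r ipZl mulN1r. Qed.
Lemma ipBl x y z : ip (x - y) z = ip x z - ip y z.
Proof. by rewrite ipDl ipNl. Qed.
Lemma ipDr x y z : ip z (x + y) = ip z x + ip z y.
Proof. by rewrite (ip_conj hip (x+y) z) (ip_conj hip x z) (ip_conj hip y z) ipDl rmorphD. Qed.
Lemma ipZr a x z : ip z (a *: x) = a^* * ip z x.
Proof. by rewrite (ip_conj hip (a*:x) z) (ip_conj hip x z) ipZl rmorphM. Qed.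
Lemma ip0r z : ip z 0 = 0.
Proof. by rewrite (ip_conj hip) ip0l rmorph0. Qed.
Lemma ipNr x z : ip z (- x) = - ip z x.
Proof. by rewrite (ip_conj hip (-x) z) (ip_conj hip x z) ipNl rmorphN. Qed.
Lemma ipBr x y z : ip z (x - y) = ip z x - ip z y.
Proof. by rewrite ipDr ipNr. Qed.
Lemma ip_ge0 x : 0 <= ip x x.
Proof. by rewrite (ip_norm hip) exprn_ge0. Qed.
Lemma ip_conjK x : (ip x x)^* = ip x x.
Proof. by rewrite (ip_norm hip) conj_Creal // rpredX // normr_real. Qed.
Lemma ip_eq0 x : ip x x = 0 -> x = 0.
Proof. by rewrite (ip_norm hip) => /eqP; rewrite expf_eq0 /= normr_eq0 => /eqP. Qed.

Lemma ip_CS x y : `|ip x y| <= `|x| * `|y|.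
Proof.
have [->|y0] := eqVneq y 0; first by rewrite ip0r normr0 normr0 mulr0.
set Q := ip y y; set c := ip x y.
have Q0 : 0 < Q by rewrite /Q (ip_norm hip) exprn_gt0 // normr_gt0.
have := ip_ge0 (x - (c / Q) *: y).
rewrite ipBl !ipBr !ipZl !ipZr -/Q -/c.
rewrite [ip y x](ip_conj hip) -/c cjM cjV ip_conjK.
have -> : ip x x - c^* / Q * c - (c / Q * c^* - c / Q * (c^* / Q * Q))
   = ip x x - c * c^* / Q by field; rewrite lt0r_neq0.
rewrite subr_ge0 ler_pdivrMr // -normCK (ip_norm hip) /Q (ip_norm hip) -exprMn.
by rewrite ler_pXn2r // ?nnegrE ?mulr_ge0.
Qed.

Lemma ip_contl y : continuous (fun x => (ip x y : (R[i] : numFieldType))).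
Proof.
move=> x0; apply/cvgrPdist_lt => e e0.
have yp : 0 < `|y| + 1 by rewrite ltr_wpDl.
apply/nbhs_normP; exists (e / (`|y| + 1)); first by rewrite /= divr_gt0.
move=> x /= Hx; rewrite -ipBl (le_lt_trans (ip_CS _ _)) //.
rewrite -(ltr_pM2r yp) in Hx; rewrite divfK ?gt_eqF // in Hx.
apply: le_lt_trans Hx; rewrite ler_wpM2l // ?lerDl //.
Qed.

Lemma ip_contr y : continuous (fun x => (ip y x : (R[i] : numFieldType))).
Proof.
move=> x0; apply/cvgrPdist_lt => e e0.
have yp : 0 < `|y| + 1 by rewrite ltr_wpDl.
apply/nbhs_normP; exists (e / (`|y| + 1)); first by rewrite /= divr_gt0.
move=> x /= Hx; rewrite -ipBr (ip_conj hip) norm_conjC.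
rewrite (le_lt_trans (ip_CS _ _)) //.
rewrite -(ltr_pM2r yp) in Hx; rewrite divfK ?gt_eqF // in Hx.
apply: le_lt_trans Hx; rewrite ler_wpM2l // ?lerDl //.
Qed.

Lemma closed0 : closed [set (0 : (R[i] : numFieldType))].
Proof. have /accessible_finite_set_closed := hausdorff_accessible (@norm_hausdorff (R[i] : numFieldType) (R[i] : numFieldType)).
by apply; exact: finite_set1. Qed.

Lemma ip_dense0 (D : set H) w : dense D -> (forall x, D x -> ip x w = 0) -> w = 0.
Proof.
move=> dD h; apply: ip_eq0.
have cA : closed ((fun x => (ip x w : (R[i] : numFieldType))) @^-1` [set 0]).
  by apply: preimage_closed closed0 => x _; exact: ip_contl.
apply: contrapT => nw.
have := dD (~` ((fun x => (ip x w : (R[i] : numFieldType))) @^-1` [set 0])).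
case; [by exists w|exact: closed_openC|].
by move=> x [/= + /h].
Qed.

Lemma closed_E g k : closed [set p : H * H | ip p.2 g = ip p.1 k].
Proof.
have -> : [set p : H * H | ip p.2 g = ip p.1 k] =
   (fun p : H * H => (ip p.2 g - ip p.1 k : (R[i] : numFieldType))) @^-1` [set 0].
  by apply/funext => p; apply/propext; split => /= [->|/eqP]; [rewrite subrr|rewrite subr_eq0 => /eqP].
apply: preimage_closed closed0 => p _; apply: cvgB.
  exact: (continuous_comp cvg_snd (@ip_contl _ _)).
exact: (continuous_comp cvg_fst (@ip_contl _ _)).
Qed.
End IP.

Section OpLin.
Variables (R : realType) (H : completeNormedModType R[i]) (S : op H).
Hypothesis S_op : is_op S.
Lemma dom0 : dom S 0. Proof. by case: S_op => [[]]. Qed.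
Lemma domZD (a : R[i]) x y : dom S x -> dom S y -> dom S (a *: x + y).
Proof. by case: S_op => [[_ h] _]; apply: h. Qed.
Lemma domD x y : dom S x -> dom S y -> dom S (x + y).
Proof. by move=> hx hy; have := domZD 1 hx hy; rewrite scale1r. Qed.
Lemma domZ (a : R[i]) x : dom S x -> dom S (a *: x).
Proof. by move=> hx; have := domZD a hx dom0; rewrite addr0. Qed.
Lemma appZD (a : R[i]) x y : dom S x -> dom S y -> app S (a *: x + y) = a *: app S x + app S y.
Proof. by case: S_op => [_ h]; apply: h. Qed.
Lemma app0 : app S 0 = 0.
Proof.
have := appZD 1 dom0 dom0; rewrite !scale1r addr0 => h.
by apply: (addrI (app S 0)); rewrite addr0 -h.
Qed.
Lemma appD x y : dom S x -> dom S y -> app S (x + y) = app S x + app S y.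
Proof. by move=> hx hy; have := appZD 1 hx hy; rewrite !scale1r. Qed.
Lemma appZ (a : R[i]) x : dom S x -> app S (a *: x) = a *: app S x.
Proof. by move=> hx; have := appZD a hx dom0; rewrite !addr0 app0 addr0. Qed.
End OpLin.

Lemma real_nneg (R : realType) (z : R[i]) : 0 <= z -> z = ((complex.Re z)%:C)%C.
Proof. by move=> z0; rewrite {1}(complexE z) ger0_Im // mulr0 addr0. Qed.

Lemma pos_real (R : realType) (e : R[i]) : 0 < e -> 0 < complex.Re e /\ e = ((complex.Re e)%:C)%C.
Proof.
move=> e0; have ee := real_nneg (ltW e0); split => //.
by move: e0; rewrite ee -(rmorph0 (real_complex R)) ltcR.
Qed.

Lemma cauchy_seq_bnd (R : realType) (H : completeNormedModType R[i]) (c : nat -> H) :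
  (forall n m, `|c n - c m|^+2 <= ((2 * (n.+1%:R^-1 + m.+1%:R^-1))%:C)%C) ->
  cvg (c @ \oo).
Proof.
move=> hc; apply/cauchy_cvgP/cauchy_exP => e e0.
have [re0 ere] := pos_real e0; set r := complex.Re e in re0 ere.
have r4 : 0 < r ^+ 2 / 4 by rewrite divr_gt0 // exprn_gt0.
have [N _ hN] := near_infty_natSinv_lt (PosNum r4).
exists (c N); exists N => // n /= hn.
rewrite -ball_normE /ball_ /=.
have : `|c N - c n| ^+ 2 < e ^+ 2.
  apply: (le_lt_trans (hc N n)); rewrite ere -rmorphXn ltcR.
  have := hN N (leqnn _); have := hN n hn; rewrite /= => h1 h2; move: h1 h2; move: (r ^+ 2) (N.+1%:R^-1) (n.+1%:R^-1) => q x y; lra.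
by rewrite ltr_pXn2r // nnegrE ?normr_ge0 ?ltW.
Qed.

Lemma ineq (K : numDomainType) (a b c a' b' c' d e1 e2 : K) :
  a + a' <= d + e1 -> b + b' <= d + e2 -> d <= c + c' ->
  (2*a + 2*b - 4*c) + (2*a' + 2*b' - 4*c') <= 2 * (e1 + e2).
Proof.
move=> h1 h2 h3.
have := lerB (lerD (ler_wpM2l (_ : 0 <= 2) h1) (ler_wpM2l (_ : 0 <= 2) h2))
   (ler_wpM2l (_ : 0 <= 4) h3).
have -> : 2 * (d + e1) + 2 * (d + e2) - 4 * d = 2 * (e1 + e2) by ring.
have -> : 2 * (a + a') + 2 * (b + b') - 4 * (c + c') =
   (2*a + 2*b - 4*c) + (2*a' + 2*b' - 4*c') by ring.
by apply; rewrite ler0n.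
Qed.

Lemma CE (R : realType) (x y : R) : ((2 * (x + y))%:C)%C = 2 * ((x%:C)%C + (y%:C)%C).
Proof. by rewrite rmorphM rmorph_nat rmorphD. Qed.

Lemma CD (R : realType) (x y : R) : ((x + y)%:C)%C = ((x%:C)%C + (y%:C)%C).
Proof. by rewrite rmorphD. Qed.

Lemma CB (R : realType) (x y : R) : ((x - y)%:C)%C = ((x%:C)%C - (y%:C)%C).
Proof. by rewrite rmorphB. Qed.
Lemma CN (R : realType) (x : R) : ((- x)%:C)%C = - ((x%:C)%C).
Proof. by rewrite rmorphN. Qed.
Lemma C0 (R : realType) : ((0 : R)%:C)%C = 0.
Proof. by rewrite rmorph0. Qed.

Lemma cvg_sqn (R : realType) (H : completeNormedModType R[i]) (f : nat -> H) l :
  f @ \oo --> l -> (fun n => (`|f n| ^+ 2 : (R[i] : numFieldType))) @ \oo --> `|l| ^+ 2.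
Proof. move=> hf; exact: cvgM (cvg_norm hf) (cvg_norm hf). Qed.

Section Hilbert.
Variables (R : realType) (H : completeNormedModType R[i]) (ip : H -> H -> R[i]).
Hypothesis hip : is_inner_product ip.

Lemma par (u w : H) : ip (w - u) (w - u) = 2 * ip u u + 2 * ip w w
   - 4 * ip ((2%:R : R[i])^-1 *: (u + w)) ((2%:R : R[i])^-1 *: (u + w)).
Proof.
rewrite (ipZl hip) (ipZr hip) (@conj_Creal _ (2%:R^-1)) ?rpredV ?realn //.
rewrite !(ipBl hip) !(ipBr hip) !(ipDl hip) !(ipDr hip).
by field.
Qed.

Lemma half (g x y : H) : g - (2%:R : R[i])^-1 *: (x + y) = (2%:R : R[i])^-1 *: ((g - x) + (g - y)).
Proof.
rewrite addrACA -opprD scalerBr; congr (_ - _).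
by rewrite -mulr2n -[g *+ 2]scaler_nat scalerA mulVf ?scale1r // pnatr_eq0.
Qed.

Lemma adj_uniq (A : op H) v h : dense (dom A) ->
  (forall f, dom A f -> ip (app A f) v = ip f h) -> app (adjoint ip A) v = h.
Proof.
move=> dA hh.
have hh' : forall f, dom A f -> ip (app A f) v = ip f (app (adjoint ip A) v).
  by apply: (@xgetPex _ 0 [set h | forall f, dom A f -> ip (app A f) v = ip f h]); exists h.
apply/subr0_eq; apply: (ip_dense0 hip dA) => f Df.
by rewrite (ipBr hip) -hh' // -hh // subrr.
Qed.

Lemma key (u w : H) : `|w - u| ^+ 2 = 2 * `|u| ^+ 2 + 2 * `|w| ^+ 2
   - 4 * `|(2%:R : R[i])^-1 *: (u + w)| ^+ 2.
Proof. by rewrite -!(ip_norm hip) par. Qed.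

Variable S : op H.
Hypotheses (S_op : is_op S) (S_dd : densely_defined S) (S_cl : closed_op S).

Lemma adj2 g k : (forall f h, graph (adjoint ip S) (f, h) -> ip h g = ip f k) -> dom S g.
Proof.
move=> hyp.
pose F x := `|g - x| ^+ 2 + `|k - app S x| ^+ 2.
have F_ge0 x : 0 <= F x by rewrite addr_ge0 // exprn_ge0.
pose FR x := complex.Re (F x).
have FE x : F x = ((FR x)%:C)%C by apply: real_nneg.
have FR_ge0 x : 0 <= FR x by rewrite -ler0c -FE.
pose E := [set FR x | x in dom S].
have hinf : has_inf E.
  split; first by exists (FR 0); exists 0 => //; exact: dom0.
  by exists 0 => _ [x _ <-]; exact: FR_ge0.
pose d := inf E.
have Fd x : dom S x -> ((d%:C)%C <= F x).
  by move=> Sx; rewrite FE lecR; apply: (ge_inf hinf.2); exists x.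
have : forall n : nat, exists x, dom S x /\ FR x < d + n.+1%:R^-1.
  move=> n; have hp : 0 < (n.+1%:R : R)^-1 by rewrite invr_gt0 ltr0Sn.
  have [_ [x Sx <-] hlt] := inf_adherent hp hinf.
  by exists x.
move/choice => [a ha].
pose b (n : nat) : R := n.+1%:R^-1.
have Sa n : dom S (a n) := (ha n).1.
have Fa n : F (a n) <= ((d%:C)%C + ((b n)%:C)%C) by rewrite FE -CD lecR ltW // (ha n).2.
have bnd n m : `|a n - a m| ^+ 2 + `|app S (a n) - app S (a m)| ^+ 2 <= ((2 * (b n + b m))%:C)%C.
  have Sm : dom S ((2%:R : R[i])^-1 *: (a n + a m)) by apply: domZ => //; apply: domD.
  have Sme : app S ((2%:R : R[i])^-1 *: (a n + a m)) = (2%:R : R[i])^-1 *: (app S (a n) + app S (a m)).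
    by rewrite appZ ?appD //; apply: domD.
  have := Fd _ Sm; rewrite /F Sme !half => hm.
  have e1 : a n - a m = (g - a m) - (g - a n) by rewrite [RHS]addrC opprB addrA subrK.
  have e2 : app S (a n) - app S (a m) = (k - app S (a m)) - (k - app S (a n)) by rewrite [RHS]addrC opprB addrA subrK.
  rewrite e1 e2 (key (g - a n)) (key (k - app S (a n))) CE; exact: (ineq (Fa n) (Fa m) hm).
have bnd1 n m : `|a n - a m| ^+ 2 <= ((2 * (n.+1%:R^-1 + m.+1%:R^-1))%:C)%C.
  by apply: le_trans (bnd n m); rewrite lerDl exprn_ge0.
have bnd2 n m : `|app S (a n) - app S (a m)| ^+ 2 <= ((2 * (n.+1%:R^-1 + m.+1%:R^-1))%:C)%C.
  by apply: le_trans (bnd n m); rewrite lerDr exprn_ge0.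
have ca := cauchy_seq_bnd bnd1.
have cSa := cauchy_seq_bnd bnd2.
have hg : graph S (lim (a @ \oo), lim ((fun n => app S (a n)) @ \oo)).
  have hnear : \forall n \near \oo, graph S (a n, app S (a n)).
    by apply: nearW => n; split => //; exact: Sa.
  have hp := cvg_pair ca cSa. apply: (@closed_cvg _ _ _ _ _ (graph S) S_cl hnear); exact: hp.
case: hg => /= Sla lbE.
move: ca cSa lbE Sla; set la := lim (a @ \oo); set lb := lim _ => ca cSa lbE Sla.
have cF : (fun n => F (a n)) @ \oo --> F la.
  apply: cvgD; apply: cvg_sqn; apply: cvgB; [exact: cvg_cst| exact: ca| exact: cvg_cst|].
  by rewrite -lbE; exact: cSa.
have cd : (fun n => F (a n)) @ \oo --> ((d%:C)%C : (R[i] : numFieldType)).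
  apply/cvgrPdist_lt => e e0; have [re0 ere] := pos_real e0.
  have [N _ hN] := near_infty_natSinv_lt (PosNum re0).
  exists N => // n /= hn.
  have dle : d <= FR (a n) by apply: (ge_inf hinf.2); exists (a n).
  rewrite FE -CB ler0_norm; last by rewrite -C0 lecR subr_le0.
  rewrite -CN opprB ere ltcR.
  have := (ha n).2; have := hN n hn; rewrite /=.
  move: (FR (a n)) (n.+1%:R^-1) => p q; lra.
have Fla : F la = ((d%:C)%C) by rewrite -(norm_cvg_lim cF) (norm_cvg_lim cd).
have Fmin x : dom S x -> F la <= F x by rewrite Fla; apply: Fd.
set u := g - la; set v := k - app S la.
have orth x : dom S x -> ip x u + ip (app S x) v = 0.
  move=> Sx.
  have Q0 : 0 <= ip x x + ip (app S x) (app S x) by rewrite addr_ge0 // (ip_ge0 hip).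
  case: (eqVneq (ip x x + ip (app S x) (app S x)) 0) => [Qz|Qnz].
    move/eqP: Qz; rewrite paddr_eq0 ?(ip_ge0 hip) // => /andP[/eqP /(ip_eq0 hip) x0 _].
    by rewrite x0 app0 // (ip0l hip) (ip0l hip) addr0.
  have Qp : 0 < ip x x + ip (app S x) (app S x) by rewrite lt_def Qnz Q0.
  have QC : (ip x x + ip (app S x) (app S x))^* = ip x x + ip (app S x) (app S x).
    by rewrite cjD !(ip_conjK hip).
  move: Qnz Qp QC.
  set Q := ip x x + ip (app S x) (app S x) => Qnz Qp QC.
  pose c := ip x u + ip (app S x) v.
  pose s := c^* / Q.
  have Sxs : dom S (la + s *: x) by apply: domD => //; apply: domZ.
  have eF : F (la + s *: x) = F la - c * c^* / Q.
    rewrite /F.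
    have -> : g - (la + s *: x) = u - s *: x by rewrite opprD addrA.
    have -> : k - app S (la + s *: x) = v - s *: app S x.
      by rewrite appD ?appZ // ?opprD ?addrA //; apply: domZ.
    rewrite -/u -/v; clearbody u v.
    rewrite -!(ip_norm hip).
    rewrite !(ipBl hip) !(ipBr hip) !(ipZl hip) !(ipZr hip).
    rewrite (ip_conj hip x u) (ip_conj hip (app S x) v).
    rewrite /s cjM cjV QC /c cjD cjD !conjCK /Q.
    by field.
  have := Fmin _ Sxs; rewrite eF -subr_ge0 addrAC subrr add0r oppr_ge0 -normCK => h.
  have : `|c| ^+ 2 / Q = 0 by apply/eqP; rewrite eq_le h divr_ge0 // exprn_ge0.
  move/eqP; rewrite mulf_eq0 invr_eq0 (negbTE Qnz) orbF expf_eq0 /= normr_eq0.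
  by move/eqP.
have adjv : app (adjoint ip S) v = - u.
  apply: adj_uniq S_dd _ => f Sf; rewrite (ipNr hip).
  by move/eqP: (orth f Sf); rewrite addrC addr_eq0 => /eqP.
have domv : dom (adjoint ip S) v.
  exists (- u) => f Sf; rewrite (ipNr hip).
  by move/eqP: (orth f Sf); rewrite addrC addr_eq0 => /eqP.
have hv := hyp v (- u) (conj domv (esym adjv)).
have ol := orth la Sla.
have e3 : ip g u + ip k v = 0.
  have := congr1 Num.conj hv.
  rewrite -(ip_conj hip (- u) g) -(ip_conj hip v k) (ipNr hip) => h.
  by rewrite -h subrr.
have : ip u u + ip v v = 0.
  have -> : ip u u = ip g u - ip la u by rewrite {1}/u (ipBl hip).
  have -> : ip v v = ip k v - ip (app S la) v by rewrite {1}/v (ipBl hip).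
  by rewrite addrACA -opprD e3 ol subr0.
move/eqP; rewrite paddr_eq0 ?(ip_ge0 hip) // => /andP[/eqP/(ip_eq0 hip) u0 _].
by have -> : g = la by apply/subr0_eq.
Qed.
End Hilbert.

Lemma cjB (R : realType) (a b : R[i]) : (a - b)^* = a^* - b^*. Proof. exact: rmorphB. Qed.

Section Main.
Variables (R : realType) (H : completeNormedModType R[i]) (ip : H -> H -> R[i]).
Hypothesis hip : is_inner_product ip.

Lemma adj_spec (A : op H) f : dom (adjoint ip A) f ->
  forall x, dom A x -> ip (app A x) f = ip x (app (adjoint ip A) f).
Proof.
move=> [h hh].
by apply: (@xgetPex _ 0 [set h | forall x, dom A x -> ip (app A x) f = ip x h]); exists h.
Qed.

Lemma sub_adj (T S : op H) f : graph T `<=` graph (adjoint ip S) -> dom T f ->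
  forall x, dom S x -> ip (app S x) f = ip x (app T f).
Proof.
move=> sub Tf x Sx; have [/= Af e] := sub (f, app T f) (conj Tf erefl).
by rewrite e; apply: adj_spec.
Qed.

Lemma incl (G : completeNormedModType R[i]) (ipG : G -> G -> R[i]) (hG : is_inner_product ipG)
 (S St T Tt : op H) (Gam0 Gam1 Gamt0 Gamt1 : H -> G)
 (pr : forall f g, dom S f -> dom St g -> ip (app S f) g = ip f (app St g))
 (T_sub : graph T `<=` graph (adjoint ip S))
 (Tt_sub : graph Tt `<=` graph (adjoint ip St))
 (St_dd : dense (dom St))
 (condG : forall f g, dom T f -> dom Tt g ->
     ip (app T f) g - ip f (app Tt g) = ipG (Gam1 f) (Gamt0 g) - ipG (Gam0 f) (Gamt1 g))
 (condD : dense (Gam0 @` dom T))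
 (condM : graph (adjoint ip (op_restrict T [set f | Gam0 f = 0]))
     = graph (op_restrict Tt [set g | Gamt0 g = 0]))
 g : dom S g -> dom Tt g /\ Gamt0 g = 0 /\ Gamt1 g = 0.
Proof.
move=> Sg.
have F1 f : dom T f -> ip (app T f) g = ip f (app S g).
  move=> Tf; have := congr1 Num.conj (sub_adj T_sub Tf Sg).
  by rewrite -(ip_conj hip (app S g) f) -(ip_conj hip g (app T f)) => ->.
have dA : dom (adjoint ip (op_restrict T [set f | Gam0 f = 0])) g.
  by exists (app S g) => f [Tf _]; exact: F1.
have gr : graph (adjoint ip (op_restrict T [set f | Gam0 f = 0]))
   (g, app (adjoint ip (op_restrict T [set f | Gam0 f = 0])) g) by split.
rewrite condM in gr; case: gr => /= [[Ttg Gt0] _].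
have eT : app Tt g = app S g.
  apply/subr0_eq; apply: (ip_dense0 hip St_dd) => x Stx.
  rewrite (ipBr hip) -(sub_adj Tt_sub Ttg Stx).
  have := congr1 Num.conj (pr g x Sg Stx).
  by rewrite -(ip_conj hip (app S g) x) -(ip_conj hip g (app St x)) => ->; rewrite subrr.
split => //; split => //.
apply: (ip_dense0 hG condD) => _ [f Tf <-].
have := condG f g Tf Ttg; rewrite eT (F1 f Tf) subrr Gt0 (ip0r hG) sub0r.
by move/eqP; rewrite eq_sym oppr_eq0 => /eqP.
Qed.

Lemma back (S T : op H) (S_op : is_op S) (S_dd : densely_defined S) (S_cl : closed_op S)
  (T_core : closure (graph T) = graph (adjoint ip S)) g k :
  (forall f, dom T f -> ip (app T f) g = ip f k) -> dom S g.
Proof.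
move=> h; apply: (adj2 hip S_op S_dd S_cl (k:=k)) => f h' gr.
have hsub : graph T `<=` [set p | ip p.2 g = ip p.1 k].
  by move=> [p1 p2] [/= Tp ->]; exact: h.
have := closureS hsub; rewrite -((closure_id _).1 (@closed_E _ _ _ hip g k)).
by rewrite T_core => /(_ _ gr).
Qed.
End Main.
Unset Implicit Arguments.

Theorem lemma2p4 (R : realType)
  (H : completeNormedModType R[i]) (ipH : H -> H -> R[i])
  (hH : is_inner_product ipH) (sepH : separable H)
  (S St : op H)
  (S_op : is_op S) (St_op : is_op St)
  (S_dd : densely_defined S) (St_dd : densely_defined St)
  (S_cl : closed_op S) (St_cl : closed_op St)
  (pair : forall f g, dom S f -> dom St g -> ipH (app S f) g = ipH f (app St g))
  (T Tt : op H) (T_op : is_op T) (Tt_op : is_op Tt)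
  (T_sub : graph T `<=` graph (adjoint ipH S))
  (Tt_sub : graph Tt `<=` graph (adjoint ipH St))
  (T_core : closure (graph T) = graph (adjoint ipH S))
  (Tt_core : closure (graph Tt) = graph (adjoint ipH St))
  (G : completeNormedModType R[i]) (ipG : G -> G -> R[i])
  (hG : is_inner_product ipG)
  (Gam0 Gam1 Gamt0 Gamt1 : H -> G)
  (Gam0_lin : linear_on (dom T) Gam0) (Gam1_lin : linear_on (dom T) Gam1)
  (Gamt0_lin : linear_on (dom Tt) Gamt0) (Gamt1_lin : linear_on (dom Tt) Gamt1)
  (condG : forall f g, dom T f -> dom Tt g ->
     ipH (app T f) g - ipH f (app Tt g)
     = ipG (Gam1 f) (Gamt0 g) - ipG (Gam0 f) (Gamt1 g))
  (condD : dense (Gam0 @` dom T) /\ dense (Gamt0 @` dom Tt))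
  (condM : graph (adjoint ipH (op_restrict T [set f | Gam0 f = 0]))
             = graph (op_restrict Tt [set g | Gamt0 g = 0])
        /\ graph (adjoint ipH (op_restrict Tt [set g | Gamt0 g = 0]))
             = graph (op_restrict T [set f | Gam0 f = 0])) :
  dom S = [set f | dom Tt f /\ Gamt0 f = 0 /\ Gamt1 f = 0] /\
  dom St = [set f | dom T f /\ Gam0 f = 0 /\ Gam1 f = 0].
Proof.
have pr' : forall f g, dom St f -> dom S g -> ipH (app St f) g = ipH f (app S g).
  move=> f g Stf Sg; have := congr1 Num.conj (pair g f Sg Stf).
  by rewrite -(ip_conj hH (app S g) f) -(ip_conj hH g (app St f)) => ->.
have condG' : forall f g, dom Tt f -> dom T g ->
    ipH (app Tt f) g - ipH f (app T g) = ipG (Gamt1 f) (Gam0 g) - ipG (Gamt0 f) (Gam1 g).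
  move=> f g Ttf Tg; have := congr1 Num.conj (condG g f Tg Ttf).
  rewrite !cjB -(ip_conj hH (app T g) f) -(ip_conj hH g (app Tt f)).
  rewrite -(ip_conj hG (Gam1 g) (Gamt0 f)) -(ip_conj hG (Gam0 g) (Gamt1 f)) => h.
  by apply: oppr_inj; rewrite !opprB.
split; apply: funext => g; apply: propext; split.
- exact: (incl hH hG pair T_sub Tt_sub St_dd condG condD.1 condM.1).
- move=> [Ttg [G0 G1]]; apply: (back hH S_op S_dd S_cl T_core (k := app Tt g)) => f Tf.
  apply/subr0_eq; rewrite condG // G0 G1 (ip0r hG) (ip0r hG) subrr //.
- exact: (incl hH hG pr' Tt_sub T_sub S_dd condG' condD.2 condM.2).
- move=> [Tg [G0 G1]]; apply: (back hH St_op St_dd St_cl Tt_core (k := app T g)) => f Ttf.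
  have := congr1 Num.conj (condG g f Tg Ttf).
  rewrite G0 G1 (ip0l hG) (ip0l hG) subrr cjB conjC0.
  rewrite -(ip_conj hH (app T g) f) -(ip_conj hH g (app Tt f)) => /subr0_eq.
  by move=> ->.
Qed.
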